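(* Let $G$ be a (not necessarily strongly connected) directed network on node set $\mathcal{V}$, and let $G^o$ be the extended network. Let $F^{\{o\}}=(I-P_{\mathcal{V}\mathcal{V}})^{-1}$, where $P$ is the transition matrix of $G^o$. Then: (i) for all $s,t\in\mathcal{V}$, $F^{\{o\}}_{st}\neq 0$ if and only if $t$ is reachable from $s$ in $G$. (ii) Let $\mathcal{F}\subseteq\mathcal{V}$ be a nonempty set of failed nodes and $\mathcal{S}=\mathcal{F}\cup\{o\}$; then $F^{\{o\}}_{\mathcal{F}\mathcal{F}}$ is invertible, and for $s,t\in\mathcal{V}\setminus\mathcal{F}$ the quantity $$\boldsymbol{F}_{st\mathcal{S}}=F^{\{o\}}_{st}-F^{\{o\}}_{s\mathcal{F}}\big(F^{\{o\}}_{\mathcal{F}\mathcal{F}}\big)^{-1}F^{\{o\}}_{\mathcal{F}t}$$ is nonzero if and only if $t$ is reachable from $s$ in the network obtained from $G$ by deleting the nodes of $\mathcal{F}$.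
   Context: $G$ has a nonnegative affinity matrix $A$ ($a_{ij}>0$ iff there is an edge from $i$ to $j$). The extended network $G^o$ is obtained by adding a new node $o$ and an edge of positive weight from every node of $\mathcal{V}$ to $o$; the random walk on $G^o$ has transition matrix $P=D^{-1}A^o$ (row-normalized affinity of $G^o$), and $o$ is treated as the target (absorbing) node. $P_{\mathcal{V}\mathcal{V}}$ is the submatrix of $P$ on rows and columns $\mathcal{V}$, so $F^{\{o\}}_{st}$ is the expected number of visits to $t$ before hitting $o$ for the walk started at $s$. $F^{\{o\}}_{s\mathcal{F}}$, $F^{\{o\}}_{\mathcal{F}\mathcal{F}}$, $F^{\{o\}}_{\mathcal{F}t}$ denote the corresponding row vector, submatrix and column vector. A node $t$ is reachable from $s$ if there is a directed path from $s$ to $t$ (each node being reachable from itself). *)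

(* Defs.v *)
From HB Require Import structures.
From mathcomp Require Import all_boot all_order all_algebra.
Set Implicit Arguments. Unset Strict Implicit. Unset Printing Implicit Defensive.
Import Order.TTheory GRing.Theory Num.Theory.
Local Open Scope ring_scope.

(* Node set V = 'I_n.  A : affinity matrix of G (a_ij > 0 iff edge i -> j).
   w i > 0 : weight of the added edge i -> o in the extended network G^o. *)

Definition dego (R : realFieldType) (n : nat) (A : 'M[R]_n) (w : 'I_n -> R)
  (i : 'I_n) : R := \sum_(j < n) A i j + w i.

(* P_VV : restriction to V x V of the transition matrix P = D^{-1} A^o of G^o *)
Definition PVV (R : realFieldType) (n : nat) (A : 'M[R]_n) (w : 'I_n -> R)
  : 'M[R]_n := \matrix_(i, j) (A i j / dego A w i).

Definition Fo (R : realFieldType) (n : nat) (A : 'M[R]_n) (w : 'I_n -> R)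
  : 'M[R]_n := invmx (1%:M - PVV A w).

Definition edgeG (R : realFieldType) (n : nat) (A : 'M[R]_n) : rel 'I_n :=
  fun i j => 0 < A i j.

Definition reachable (R : realFieldType) (n : nat) (A : 'M[R]_n) (s t : 'I_n)
  : bool := connect (edgeG A) s t.

Definition edgeG_del (R : realFieldType) (n : nat) (A : 'M[R]_n)
  (Fs : {set 'I_n}) : rel 'I_n :=
  fun i j => [&& i \notin Fs, j \notin Fs & 0 < A i j].

Definition reachable_del (R : realFieldType) (n : nat) (A : 'M[R]_n)
  (Fs : {set 'I_n}) (s t : 'I_n) : bool := connect (edgeG_del A Fs) s t.

Definition subFF (R : realFieldType) (n : nat) (M : 'M[R]_n) (Fs : {set 'I_n})
  : 'M[R]_#|Fs| := \matrix_(i, j) M (enum_val i) (enum_val j).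
Definition rowSF (R : realFieldType) (n : nat) (M : 'M[R]_n) (Fs : {set 'I_n})
  (s : 'I_n) : 'rV[R]_#|Fs| := \row_j M s (enum_val j).
Definition colFT (R : realFieldType) (n : nat) (M : 'M[R]_n) (Fs : {set 'I_n})
  (t : 'I_n) : 'cV[R]_#|Fs| := \col_i M (enum_val i) t.

Definition Fschur (R : realFieldType) (n : nat) (M : 'M[R]_n) (Fs : {set 'I_n})
  (s t : 'I_n) : R :=
  M s t - (rowSF M Fs s *m invmx (subFF M Fs) *m colFT M Fs t) 0 0.

(* Main.v *)
From HB Require Import structures.
From mathcomp Require Import all_boot all_order all_algebra.
Require Import Defs.
Import Order.TTheory GRing.Theory Num.Theory.
Local Open Scope ring_scope.
Set Implicit Arguments. Unset Strict Implicit. Unset Printing Implicit Defensive.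

Section Aux.
Variable R : realFieldType.

Lemma exists_max (T : finType) (C : {pred T}) (f : T -> R) (x0 : T) :
  C x0 -> exists2 i, C i & forall j, C j -> f j <= f i.
Proof.
move=> Cx0.
case: (@arg_maxP _ _ T x0 C f Cx0) => i Ci H.
by exists i.
Qed.

Definition goodM n (P : 'M[R]_n) :=
  (forall i j, 0 <= P i j) /\ (forall i, \sum_j P i j < 1).

Lemma kernel0 n (P : 'M[R]_n) (y : 'I_n -> R) : goodM P ->
  (forall i, y i = \sum_j P i j * y j) -> forall i, y i = 0.
Proof.
move=> [P0 P1] Hy i.
have [k _ Hk] := @exists_max _ predT (fun j => `|y j|) i isT.
suff : `|y k| <= 0 by move=> H; apply/normr0_eq0/eqP; rewrite eq_le normr_ge0 andbT (le_trans (Hk i isT)).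
have H1 : `|y k| <= (\sum_j P k j) * `|y k|.
  rewrite {1}Hy mulr_suml (le_trans (ler_norm_sum _ _ _)) //.
  apply: ler_sum => j _; rewrite normrM ger0_norm // ler_wpM2l //.
  exact: Hk.
have : (1 - \sum_j P k j) * `|y k| <= 0 by rewrite mulrBl mul1r subr_le0.
rewrite pmulr_rle0 // subr_gt0; exact: P1.
Qed.

Lemma sol_ge0 n (P : 'M[R]_n) (t : 'I_n) (y : 'I_n -> R) : goodM P ->
  (forall i, y i = (i == t)%:R + \sum_j P i j * y j) -> forall i, 0 <= y i.
Proof.
move=> [P0 P1] Hy i.
have [k _ Hk] := @exists_max _ predT (fun j => - y j) i isT.
rewrite leNgt; apply/negP => yi.
have yk : y k < 0 by rewrite -oppr_gt0 (lt_le_trans _ (Hk i isT)) // oppr_gt0.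
have H1 : (\sum_j P k j) * y k <= y k.
  rewrite {2}Hy mulr_suml -(add0r (\sum_i _ * _)) lerD ?ler0n //.
  apply: ler_sum => j _; rewrite ler_wpM2l //.
  by rewrite -lerN2; exact: Hk.
have : 0 <= (1 - \sum_j P k j) * y k by rewrite mulrBl mul1r subr_ge0.
by rewrite pmulr_rge0 ?subr_gt0 // leNgt yk.
Qed.

Lemma sol_pos n (P : 'M[R]_n) (t : 'I_n) (y : 'I_n -> R) : goodM P ->
  (forall i, y i = (i == t)%:R + \sum_j P i j * y j) ->
  forall s, connect [rel i j | 0 < P i j] s t -> 0 < y s.
Proof.
move=> [P0 P1] Hy s /connectP [p].
have y0 := sol_ge0 (conj P0 P1) Hy.
elim: p s => [|k p IH] s /= => [_ <- | /andP [Psk pth] lst].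
  by rewrite Hy eqxx ltr_pwDl ?ltr01 // sumr_ge0 // => j _; rewrite mulr_ge0.
have yk := IH k pth lst.
rewrite Hy ltr_wpDl ?ler0n //.
rewrite (bigD1 k) //= ltr_wpDr ?mulr_gt0 //.
by rewrite sumr_ge0 // => j _; rewrite mulr_ge0.
Qed.

Lemma sol_zero n (P : 'M[R]_n) (t : 'I_n) (y : 'I_n -> R) : goodM P ->
  (forall i, y i = (i == t)%:R + \sum_j P i j * y j) ->
  forall s, ~~ connect [rel i j | 0 < P i j] s t -> y s = 0.
Proof.
move=> [P0 P1] Hy s ns.
have y0 := sol_ge0 (conj P0 P1) Hy.
set C := fun i => ~~ connect [rel i j | 0 < P i j] i t.
have [k Ck Hk] := @exists_max _ C y s ns.
have kt : (k == t) = false.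
  by apply/negbTE; apply: contraNneq Ck => ->; rewrite connect0.
suff : y k <= 0 by move=> H; apply/eqP; rewrite eq_le y0 andbT (le_trans (Hk s ns)).
have H1 : y k <= (\sum_j P k j) * y k.
  rewrite {1}Hy kt add0r mulr_suml.
  apply: ler_sum => j _.
  have [Pp|] := boolP (0 < P k j).
    rewrite ler_wpM2l //; apply: Hk; rewrite /C.
    apply: contra Ck => cj; apply: connect_trans (connect1 _) cj; exact: Pp.
  by rewrite lt_neqAle P0 andbT negbK => /eqP <-; rewrite !mul0r.
have : (1 - \sum_j P k j) * y k <= 0 by rewrite mulrBl mul1r subr_le0.
by rewrite pmulr_rle0 // subr_gt0.
Qed.

Lemma sol_char n (P : 'M[R]_n) (t : 'I_n) (y : 'I_n -> R) : goodM P ->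
  (forall i, y i = (i == t)%:R + \sum_j P i j * y j) ->
  forall s, y s != 0 <-> connect [rel i j | 0 < P i j] s t.
Proof.
move=> g Hy s; split.
  by apply: contraNT => /(sol_zero g Hy) ->.
by move/(sol_pos g Hy); rewrite lt0r => /andP [].
Qed.

Lemma unit_good n (P : 'M[R]_n) : goodM P -> (1%:M - P) \in unitmx.
Proof.
move=> g; rewrite unitmxE unitfE -det_tr; apply/negP => /det0P [v nz vM].
apply/negP: nz; rewrite negbK; apply/eqP/rowP => i; rewrite mxE.
apply: (kernel0 g (y := fun j => v 0 j)) => k.
move: vM; rewrite linearB /= trmx1 mulmxBr mulmx1 => /eqP; rewrite subr_eq0 => /eqP vE.
rewrite {1}vE mxE; apply: eq_bigr => j _; by rewrite mxE mulrC.
Qed.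

Lemma Frow n (P : 'M[R]_n) : (1%:M - P) \in unitmx -> forall i t,
  invmx (1%:M - P) i t = (i == t)%:R + \sum_j P i j * invmx (1%:M - P) j t.
Proof.
move=> U i t; have := mulmxV U; rewrite mulmxBl mul1mx => /eqP.
rewrite subr_eq => /eqP E.
by rewrite {1}E !mxE.
Qed.

Definition Pdel n (P : 'M[R]_n) (Fs : {set 'I_n}) : 'M[R]_n :=
  \matrix_(i, j) (if (i \notin Fs) && (j \notin Fs) then P i j else 0).

Lemma good_del n (P : 'M[R]_n) Fs : goodM P -> goodM (Pdel P Fs).
Proof.
move=> [P0 P1]; split=> [i j|i]; first by rewrite mxE; case: ifP.
apply: le_lt_trans (P1 i); apply: ler_sum => j _; rewrite mxE; case: ifP => //.
Qed.

Lemma sum_del n (P : 'M[R]_n) (Fs : {set 'I_n}) (y : 'I_n -> R) i :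
  i \notin Fs -> (forall j, j \in Fs -> y j = 0) ->
  \sum_j P i j * y j = \sum_j Pdel P Fs i j * y j.
Proof.
move=> iF yF; apply: eq_bigr => j _; rewrite mxE iF /=.
by case: ifPn => // /negbNE /yF ->; rewrite !mulr0.
Qed.

Lemma sum_del_in n (P : 'M[R]_n) (Fs : {set 'I_n}) (y : 'I_n -> R) i :
  i \in Fs -> \sum_j Pdel P Fs i j * y j = 0.
Proof. by move=> iF; apply: big1 => j _; rewrite mxE iF /= mul0r. Qed.

Definition yc n (F : 'M[R]_n) (Fs : {set 'I_n}) (c : 'I_#|Fs| -> R) (i : 'I_n) :=
  \sum_k F i (enum_val k) * c k.
Arguments yc [n] F Fs c i.

Lemma yc_out n (P : 'M[R]_n) (Fs : {set 'I_n}) c i :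
  (1%:M - P) \in unitmx -> i \notin Fs ->
  yc (invmx (1%:M - P)) Fs c i = \sum_j P i j * yc (invmx (1%:M - P)) Fs c j.
Proof.
move=> U iF; rewrite /yc.
under eq_bigr => k _ do rewrite Frow //.
have -> : \sum_j P i j * (\sum_k invmx (1%:M - P) j (enum_val k) * c k) =
          \sum_j \sum_k P i j * (invmx (1%:M - P) j (enum_val k) * c k).
  by apply: eq_bigr => j _; rewrite mulr_sumr.
rewrite exchange_big /=; apply: eq_bigr => k _.
have -> : (i == enum_val k) = false.
  by apply/negbTE; apply: contraNneq iF => ->; exact: enum_valP.
by rewrite add0r mulr_suml; apply: eq_bigr => j _; rewrite mulrA.
Qed.

Lemma yc_coef n (P : 'M[R]_n) (Fs : {set 'I_n}) c f :
  (1%:M - P) \in unitmx ->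
  c f = yc (invmx (1%:M - P)) Fs c (enum_val f) - \sum_j P (enum_val f) j * yc (invmx (1%:M - P)) Fs c j.
Proof.
move=> U; rewrite /yc.
have -> : \sum_j P (enum_val f) j * (\sum_k invmx (1%:M - P) j (enum_val k) * c k) =
          \sum_j \sum_k P (enum_val f) j * (invmx (1%:M - P) j (enum_val k) * c k).
  by apply: eq_bigr => j _; rewrite mulr_sumr.
rewrite exchange_big /= -sumrB.
have E : forall k, invmx (1%:M - P) (enum_val f) (enum_val k) * c k -
    \sum_j P (enum_val f) j * (invmx (1%:M - P) j (enum_val k) * c k) =
    (enum_val f == enum_val k)%:R * c k.
  move=> k; rewrite Frow // mulrDl.
  under [X in _ - X]eq_bigr => j _ do rewrite mulrA.
  by rewrite -mulr_suml addrK.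
under eq_bigr => k _ do rewrite E.
rewrite (bigD1 f) //= eqxx mul1r big1 ?addr0 // => k kf.
by rewrite (inj_eq enum_val_inj) eq_sym (negbTE kf) mul0r.
Qed.

Lemma FF_unit n (P : 'M[R]_n) (Fs : {set 'I_n}) : goodM P ->
  subFF (invmx (1%:M - P)) Fs \in unitmx.
Proof.
move=> g; have U := unit_good g; set F := invmx _.
rewrite unitmxE unitfE -det_tr; apply/negP => /det0P [v nz vM].
pose c := fun k => v 0 k.
have yF : forall f : 'I_#|Fs|, yc F Fs c (enum_val f) = 0.
  move=> f; have := congr1 (fun M : 'rV[R]_#|Fs| => M 0 f) vM; rewrite !mxE => <-.
  by apply: eq_bigr => k _; rewrite !mxE mulrC.
have yin : forall j, j \in Fs -> yc F Fs c j = 0.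
  by move=> j jF; rewrite -(enum_rankK_in jF jF); exact: yF.
have y0 : forall i, yc F Fs c i = 0.
  apply: (kernel0 (good_del Fs g)) => i; case: (boolP (i \in Fs)) => iF.
    by rewrite yin // sum_del_in.
  by rewrite yc_out // (sum_del P (Fs:=Fs)).
apply/negP: nz; rewrite negbK; apply/eqP/rowP => f; rewrite mxE.
change (c f = 0).
rewrite (@yc_coef n P Fs c f U) y0 big1 ?subr0 // => j _.
by rewrite y0 mulr0.
Qed.

Lemma schur_char n (P : 'M[R]_n) (Fs : {set 'I_n}) s t : goodM P ->
  s \notin Fs -> t \notin Fs ->
  (Fschur (invmx (1%:M - P)) Fs s t != 0 <-> connect [rel i j | 0 < Pdel P Fs i j] s t).
Proof.
move=> g sF tF; have U := unit_good g; have FU := FF_unit Fs g.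
set F := invmx (1%:M - P) in FU *.
pose cm := invmx (subFF F Fs) *m colFT F Fs t.
pose c := fun k => cm k 0.
have Fe : Fschur F Fs s t = F s t - yc F Fs c s.
  rewrite /Fschur -mulmxA mxE; congr (_ - _); apply: eq_bigr => k _; by rewrite /rowSF mxE.
pose z := fun i => F i t - yc F Fs c i.
have zF : forall j, j \in Fs -> z j = 0.
  move=> j jF; rewrite /z -(enum_rankK_in jF jF); set f := enum_rank_in jF j.
  have E : (subFF F Fs *m cm) f 0 = colFT F Fs t f 0.
    by rewrite /cm mulmxA mulmxV // mul1mx.
  have -> : yc F Fs c (enum_val f) = (subFF F Fs *m cm) f 0.
    by rewrite mxE; apply: eq_bigr => k _; rewrite mxE.
  by rewrite E mxE subrr.
have Hz : forall i, z i = (i == t)%:R + \sum_j Pdel P Fs i j * z j.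
  move=> i; case: (boolP (i \in Fs)) => iF.
    rewrite zF // sum_del_in // addr0.
    have -> : (i == t) = false by apply/negbTE; apply: contraTneq iF => ->.
    by [].
  rewrite -(sum_del P (Fs:=Fs)) // /z {1}Frow // yc_out //.
  rewrite -addrA -sumrB; congr (_ + _); apply: eq_bigr => j _; by rewrite mulrBr.
have := sol_char (good_del Fs g) Hz s.
by rewrite Fe.
Qed.
End Aux.
Unset Implicit Arguments.

Theorem mainTheorem18 (R : realFieldType) (n : nat) (A : 'M[R]_n)
  (w : 'I_n -> R)
  (hA : forall i j, 0 <= A i j) (hw : forall i, 0 < w i) :
  (1%:M - PVV A w \in unitmx) /\
  (forall s t : 'I_n, Fo A w s t != 0 <-> reachable A s t) /\
  (forall Fs : {set 'I_n}, Fs != set0 ->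
     subFF (Fo A w) Fs \in unitmx /\
     (forall s t : 'I_n, s \notin Fs -> t \notin Fs ->
        (Fschur (Fo A w) Fs s t != 0 <-> reachable_del A Fs s t))).
Proof.
have dpos : forall i, 0 < dego A w i.
  by move=> i; rewrite /dego ltr_wpDl ?hw // sumr_ge0.
have g : goodM (PVV A w).
  split=> [i j|i]; first by rewrite mxE divr_ge0 ?hA // ltW.
  under eq_bigr => j _ do rewrite mxE.
  by rewrite -mulr_suml ltr_pdivrMr // mul1r /dego ltrDl.
have edgeE : [rel i j | 0 < PVV A w i j] =2 edgeG A.
  by move=> i j /=; rewrite mxE ltr_pdivlMr // mul0r.
have U := unit_good g.
split; first exact: U.
split.
  move=> s t; rewrite /Fo /reachable -(eq_connect edgeE).
  exact: (sol_char g (y := fun i => invmx (1%:M - PVV A w) i t) (fun i => Frow U i t)).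
move=> Fs _; split; first exact: FF_unit.
have edel : [rel i j | 0 < Pdel (PVV A w) Fs i j] =2 edgeG_del A Fs.
  move=> i j /=; rewrite /edgeG_del mxE.
  case: (i \in Fs); case: (j \in Fs); rewrite /= ?ltxx //; exact: edgeE.
move=> s t sF tF; rewrite /reachable_del -(eq_connect edel).
exact: schur_char.
Qed.
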